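(* There exists a constant $C>0$ such that for every natural number $n$ and every natural number $\alpha$ with $5 \log n \leq \alpha \leq n$, there exist $t \geq \frac{1}{C n^5}\, 2^\alpha$ strings $x_1, \ldots, x_t \in \{0,1\}^n$ that are pairwise $\alpha$-independent, i.e. $C(x_i) - C(x_i \mid x_j) \leq \alpha$ for all $i \neq j$.
   Context: $C(x)$ denotes the plain Kolmogorov complexity of the binary string $x$ with respect to a fixed universal Turing machine; $C(x \mid y)$ denotes the conditional plain Kolmogorov complexity of $x$ given $y$ with respect to a fixed universal conditional machine. Logarithms are base $2$. *)

(* Defs.v *)
From Stdlib Require Import List Arith Reals ClassicalEpsilon.
Import ListNotations.

Inductive code : Type :=
| CZero
| CSucc
| CProj (i : nat)
| CComp (f : code) (gs : list code)
| CPrec (f g : code)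
| CMu (f : code).

Inductive eval : code -> list nat -> nat -> Prop :=
| ev_zero args : eval CZero args 0
| ev_succ args : eval CSucc args (S (hd 0 args))
| ev_proj i args : eval (CProj i) args (nth i args 0)
| ev_comp f gs args ys y :
    evals gs args ys -> eval f ys y -> eval (CComp f gs) args y
| ev_prec0 f g rest y : eval f rest y -> eval (CPrec f g) (0 :: rest) y
| ev_precS f g n rest z y :
    eval (CPrec f g) (n :: rest) z -> eval g (n :: z :: rest) y ->
    eval (CPrec f g) (S n :: rest) y
| ev_mu f args n :
    eval f (n :: args) 0 ->
    (forall m, m < n -> exists k, eval f (m :: args) (S k)) ->
    eval (CMu f) args n
with evals : list code -> list nat -> list nat -> Prop :=
| evs_nil args : evals [] args []
| evs_cons g gs args y ys :
    eval g args y -> evals gs args ys -> evals (g :: gs) args (y :: ys).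

(* Bijective encoding of binary strings into natural numbers. *)
Fixpoint enc (s : list bool) : nat :=
  match s with
  | [] => 0
  | b :: s' => S (2 * enc s' + (if b then 1 else 0))
  end.

(* Machines as partial functions on binary strings (None = diverges). *)
Definition machine := list bool -> option (list bool).
Definition cmachine := list bool -> list bool -> option (list bool).

Definition computable (M : machine) : Prop :=
  exists c, forall p n, eval c [enc p] n <-> exists x, M p = Some x /\ n = enc x.

Definition ccomputable (M : cmachine) : Prop :=
  exists c, forall p y n,
    eval c [enc p; enc y] n <-> exists x, M p y = Some x /\ n = enc x.

Definition universal (U : machine) : Prop :=
  computable U /\
  forall M, computable M -> exists c : nat, forall p x,
    M p = Some x -> exists q, U q = Some x /\ length q <= length p + c.

Definition cuniversal (U : cmachine) : Prop :=
  ccomputable U /\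
  forall M, ccomputable M -> exists c : nat, forall p y x,
    M p y = Some x -> exists q, U q y = Some x /\ length q <= length p + c.

Definition least (P : nat -> Prop) : nat :=
  epsilon (inhabits 0) (fun k => P k /\ forall j, P j -> k <= j).

Definition KC (V : machine) (x : list bool) : nat :=
  least (fun k => exists p, V p = Some x /\ length p = k).

Definition KCc (U : cmachine) (x y : list bool) : nat :=
  least (fun k => exists p, U p y = Some x /\ length p = k).

(* Main.v *)
Require Import Defs.
From Stdlib Require Import List Arith Reals.
From Stdlib Require List.
From mathcomp Require all_boot.
Module Comb.
Import all_boot.

Section S.
Variable T : finType.
Variable bad : T -> T -> bool.
Variable D : nat.
Hypothesis HD : forall z, #|[set x | bad x z]| <= D.

Lemma sum_bad_z (S : {set T}) z : \sum_(x in S) (bad x z : nat) <= D.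
Proof.
rewrite -big_mkcondr /= sum1_card.
apply: leq_trans (HD z); apply: subset_leq_card; apply/subsetP => x.
by rewrite !inE => /andP[].
Qed.

Lemma card_sum (S : {set T}) x : #|[set z in S | bad x z]| = \sum_(z in S) (bad x z : nat).
Proof.
rewrite -big_mkcondr /= -sum1_card; apply: eq_bigl => z; by rewrite !inE.
Qed.

Lemma indep_ex : forall S : {set T}, exists I : {set T},
  I \subset S /\ (forall x y, x \in I -> y \in I -> x != y -> ~~ bad x y) /\
  #|S| <= (2*D+1) * #|I|.
Proof.
move=> S; have [m Hm] := ubnP #|S|; elim: m S Hm => // m IH S HS.
have [->|[x0 Hx0]] := set_0Vmem S.
  by exists set0; split; [exact: sub0set | split; [move=> x y; rewrite inE | rewrite cards0]].
have [x /andP[xS Hx] | Hno] := pickP [pred x | (x \in S) && (#|[set z in S | bad x z]| <= D)].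
  set A := x |: ([set z in S | bad x z] :|: [set z in S | bad z x]).
  set R := S :\: A.
  have HA : #|S :&: A| <= 2*D+1.
    apply: leq_trans (subset_leq_card (subsetIr S A)) _.
    rewrite /A cardsU1 (addnC (2*D)); apply: leq_add; first by case: (_ \notin _).
    apply: leq_trans (leq_card_setU _ _) _; rewrite mul2n -addnn; apply: leq_add => //.
    apply: leq_trans (HD x); apply: subset_leq_card; apply/subsetP => z.
    by rewrite !inE => /andP[].
  have HxA : x \in S :&: A by rewrite !inE xS eqxx.
  have HSR : #|S| = #|S :&: A| + #|R| by rewrite (cardsID A S).
  have HRlt : #|R| < m.
    have H0 : 0 < #|S :&: A| by apply/card_gt0P; exists x.
    have H1 : #|R| < #|S| by rewrite HSR -[X in X < _]add0n ltn_add2r.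
    by apply: leq_trans H1 _; rewrite -ltnS.
  have [I' [sI' [indI' cI']]] := IH R HRlt.
  have xI' : x \notin I'.
    apply/negP => /(subsetP sI'); by rewrite !inE eqxx.
  exists (x |: I'); split; [|split].
  - apply/subsetP => z; rewrite in_setU1 => /orP[/eqP->//|/(subsetP sI')]; by rewrite inE => /andP[].
  - move=> u v; rewrite !inE => /orP[/eqP->|uI] /orP[/eqP->|vI]; first by rewrite eqxx.
    + move=> _; move/(subsetP sI'): vI; rewrite !inE; case: (v == x) => //=.
      by case: (v \in S) => //=; rewrite ?andbF ?andbT; case: (bad x v); case: (bad v x).
    + move=> _; move/(subsetP sI'): uI; rewrite !inE; case: (u == x) => //=.
      by case: (u \in S) => //=; rewrite ?andbF ?andbT; case: (bad x u); case: (bad u x).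
    + exact: indI'.
  - rewrite cardsU1 xI' HSR mulnDr muln1 addnC [X in _ <= X]addnC; exact: leq_add.
have Hno' : forall x, x \in S -> D < #|[set z in S | bad x z]|.
  move=> x xS; move: (Hno x) => /=; rewrite xS /=; by move/negbT; rewrite -ltnNge.
have H1 : \sum_(x in S) D.+1 <= \sum_(x in S) \sum_(z in S) (bad x z : nat).
  apply: leq_sum => x xS; rewrite -card_sum; exact: Hno'.
have H2 : \sum_(x in S) \sum_(z in S) (bad x z : nat) <= \sum_(z in S) D.
  rewrite exchange_big /=; apply: leq_sum => z _; exact: sum_bad_z.
have H3 := leq_trans H1 H2; rewrite !sum_nat_const in H3.
have Hpos : 0 < #|S| by apply/card_gt0P; exists x0.
by exfalso; move: H3; rewrite leq_pmul2l // ltnn.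
Qed.
End S.

Lemma uniq_NoDup (T : eqType) (s : seq T) : uniq s -> List.NoDup s.
Proof.
elim: s => [|a s IH] /=; first by constructor.
move=> /andP[ha hs]; constructor; last exact: IH.
move=> Hin; move/negP: ha; apply; elim: s Hin {IH hs} => //= b s IH [->|H].
  by rewrite inE eqxx.
by rewrite inE IH ?orbT.
Qed.

Lemma In_mem (T : eqType) (s : seq T) x : List.In x s -> x \in s.
Proof. elim: s => //= b s IH [->|H]; by rewrite inE ?eqxx // IH ?orbT. Qed.

Lemma card_inj_bound (T : finType) (A : {set T}) (f : T -> nat) D :
  (forall x, x \in A -> f x < D) -> {in A &, injective f} -> #|A| <= D.
Proof.
move=> Hlt Hinj; rewrite cardE.
rewrite -(size_map f) -(size_iota 0 D); apply: uniq_leq_size.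
  by rewrite map_inj_in_uniq ?enum_uniq // => x y; rewrite !mem_enum; apply: Hinj.
move=> k /mapP[x]; rewrite mem_enum => xA ->; rewrite mem_iota add0n; exact: Hlt.
Qed.

Lemma indep_lists (n D : nat) (bad : list bool -> list bool -> bool) :
  (forall z, List.length z = n -> exists f : list bool -> nat,
     (forall x, List.length x = n -> bad x z = true -> f x < D) /\
     (forall x x', List.length x = n -> List.length x' = n -> bad x z = true ->
        bad x' z = true -> f x = f x' -> x = x')) ->
  exists xs : list (list bool), List.NoDup xs /\
    List.Forall (fun x => List.length x = n) xs /\
    2 ^ n <= (2 * D + 1) * List.length xs /\
    (forall x y, List.In x xs -> List.In y xs -> x <> y -> bad x y = false).
Proof.
move=> Hinj.
pose badT (x z : n.-tuple bool) := bad (val x) (val z).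
have HD : forall z, #|[set x | badT x z]| <= D.
  move=> z; have [f [Hf1 Hf2]] := Hinj (val z) (size_tuple z).
  apply: (@card_inj_bound _ _ (fun x : n.-tuple bool => f (val x))).
    by move=> x; rewrite inE => Hb; apply: Hf1 => //; exact: size_tuple.
  move=> x y; rewrite !inE => hx hy e; apply: val_inj.
  by apply: Hf2 => //; exact: size_tuple.
have [I [_ [Hind Hc]]] := @indep_ex _ badT D HD [set: n.-tuple bool].
exists (map val (enum I)); split; [|split; [|split]].
- apply: uniq_NoDup; rewrite map_inj_uniq ?enum_uniq //; exact: val_inj.
- apply/List.Forall_forall => x /In_mem /mapP[y _ ->]; exact: size_tuple.
- have len_size : forall (U : Type) (s : seq U), length s = size s by move=> U; elim => //= a s ->.
  rewrite len_size size_map -cardE. move: Hc; rewrite cardsT card_tuple card_bool; exact: id.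
- move=> x y /In_mem /mapP[x' hx ->] /In_mem /mapP[y' hy ->] hne.
  apply/negbTE; apply: Hind; [by rewrite -mem_enum | by rewrite -mem_enum |].
  by apply/eqP => e; apply: hne; rewrite e.
Qed.

Lemma powE a b : Nat.pow a b = expn a b.
Proof. elim: b => // b IH; rewrite expnS -IH; reflexivity. Qed.

Lemma indep_lists' (n D : nat) (bad : list bool -> list bool -> bool) :
  (forall z, List.length z = n -> exists f : list bool -> nat,
     (forall x, List.length x = n -> bad x z = true -> (f x < D)%coq_nat) /\
     (forall x x', List.length x = n -> List.length x' = n -> bad x z = true ->
        bad x' z = true -> f x = f x' -> x = x')) ->
  exists xs : list (list bool), List.NoDup xs /\
    List.Forall (fun x => List.length x = n) xs /\
    (Nat.pow 2 n <= Nat.mul (Nat.add (Nat.mul 2 D) 1) (List.length xs))%coq_nat /\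
    (forall x y, List.In x xs -> List.In y xs -> x <> y -> bad x y = false).
Proof.
move=> H; have [|xs [h1 [h2 [h3 h4]]]] := @indep_lists n D bad.
  move=> z hz; have [f [hf1 hf2]] := H z hz; exists f; split => //.
  by move=> x hx hb; apply/ltP; apply: hf1.
exists xs; split => //; split => //; split => //.
by apply/leP; rewrite powE plusE !multE.
Qed.
End Comb.
From Stdlib Require Import Lia Lra Classical ClassicalEpsilon.
Import ListNotations.

Lemma eval_proj0 args n : eval (CProj 0) args n <-> n = nth 0 args 0.
Proof. split; intro H. - inversion H; subst; reflexivity. - subst; constructor. Qed.

Lemma id_comp : computable (fun p => Some p).
Proof.
  exists (CProj 0). intros p n. rewrite eval_proj0. simpl. split.
  - intros ->. exists p. auto.
  - intros [x [H ->]]. injection H; intros ->; reflexivity.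
Qed.

Lemma id_ccomp : ccomputable (fun p y => Some p).
Proof.
  exists (CProj 0). intros p y n. rewrite eval_proj0. simpl. split.
  - intros ->. exists p. auto.
  - intros [x [H ->]]. injection H; intros ->; reflexivity.
Qed.

Lemma has_min (P : nat -> Prop) k0 : P k0 -> exists k, P k /\ forall j, P j -> k <= j.
Proof.
  induction k0 as [k0 IH] using (well_founded_induction lt_wf). intros H.
  destruct (classic (exists j, j < k0 /\ P j)) as [[j [Hj Pj]]|Hno].
  - exact (IH j Hj Pj).
  - exists k0. split; auto. intros j Pj. destruct (le_lt_dec k0 j); auto.
    exfalso; apply Hno; eauto.
Qed.

Lemma least_spec (P : nat -> Prop) k0 : P k0 -> P (least P) /\ forall j, P j -> least P <= j.
Proof.
  intros H. unfold least. apply (epsilon_spec (inhabits 0) (fun k => P k /\ forall j, P j -> k <= j)).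
  exact (has_min P k0 H).
Qed.

Lemma enc_bound p : S (enc p) < 2 ^ S (length p).
Proof.
  induction p as [|b p IH]; simpl in *. - lia.
  - destruct b; lia.
Qed.

Lemma enc_inj p q : enc p = enc q -> p = q.
Proof.
  revert q; induction p as [|b p IH]; intros [|b' q]; simpl; try lia; auto.
  intros H. destruct b, b'; try lia; f_equal; apply IH; lia.
Qed.

Lemma KC_bound V : universal V -> exists c0, forall x, KC V x <= length x + c0.
Proof.
  intros [_ HV]. destruct (HV _ id_comp) as [c Hc]. exists c. intros x.
  destruct (Hc x x eq_refl) as [q [Hq Hl]].
  assert (P : exists p, V p = Some x /\ length p = length q) by eauto.
  destruct (least_spec (fun k => exists p, V p = Some x /\ length p = k) _ P) as [_ H2]. unfold KC. specialize (H2 _ P). lia.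
Qed.

Lemma KCc_prog U : cuniversal U -> forall x y,
  exists p, U p y = Some x /\ length p = KCc U x y.
Proof.
  intros [_ HU] x y. destruct (HU _ id_ccomp) as [c Hc].
  destruct (Hc x y x eq_refl) as [q [Hq _]].
  assert (P : exists p, U p y = Some x /\ length p = length q) by eauto.
  destruct (least_spec (fun k => exists p, U p y = Some x /\ length p = k) _ P) as [H1 _]. exact H1.
Qed.

Theorem theorem5 :
  forall (V : machine) (U : cmachine), universal V -> cuniversal U ->
  exists Cc : R, (Cc > 0)%R /\
    forall n alpha : nat, (0 < n)%nat ->
      (5 * (ln (INR n) / ln 2) <= INR alpha)%R -> (alpha <= n)%nat ->
      exists xs : list (list bool),
        NoDup xs /\
        Forall (fun x => length x = n) xs /\
        (INR (length xs) >= 2 ^ alpha / (Cc * INR n ^ 5))%R /\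
        (forall x y, In x xs -> In y xs -> x <> y ->
           (INR (KC V x) - INR (KCc U x y) <= INR alpha)%R).
Proof.
  intros V U HV HU.
  destruct (KC_bound V HV) as [c0 Hc0].
  exists (INR (3 * 2 ^ c0)). split.
  { apply lt_0_INR. pose proof (Nat.pow_nonzero 2 c0). lia. }
  intros n alpha Hn _ Hale.
  set (K := n + c0 - alpha).
  set (bad := fun x z => Nat.ltb (KCc U x z) K).
  destruct (Comb.indep_lists' n (2 ^ K) bad) as [xs [H1 [H2 [H3 H4]]]].
  { intros z _.
    set (pr := fun x => epsilon (inhabits nil) (fun p => U p z = Some x /\ length p = KCc U x z)).
    assert (Hpr : forall x, U (pr x) z = Some x /\ length (pr x) = KCc U x z).
    { intros x. unfold pr. apply (epsilon_spec (inhabits nil) (fun p => U p z = Some x /\ length p = KCc U x z)).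
      apply KCc_prog; exact HU. }
    exists (fun x => enc (pr x)). split.
    - intros x _ Hb. unfold bad in Hb. apply Nat.ltb_lt in Hb.
      pose proof (enc_bound (pr x)). destruct (Hpr x) as [_ Hl].
      assert (2 ^ S (length (pr x)) <= 2 ^ K) by (apply Nat.pow_le_mono_r; lia).
      lia.
    - intros x x' _ _ _ _ He. apply enc_inj in He.
      destruct (Hpr x) as [Ha _]. destruct (Hpr x') as [Hb _].
      rewrite He in Ha. congruence. }
  exists xs. split; [exact H1|]. split; [exact H2|]. split.
  - set (t := length xs) in *.
    assert (HN : 2 ^ alpha <= 3 * 2 ^ c0 * t).
    { assert (E : 2 ^ alpha * 2 ^ K = 2 ^ n * 2 ^ c0).
      { rewrite <- !Nat.pow_add_r. f_equal. unfold K. lia. }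
      assert (B1 : 1 <= 2 ^ K) by (pose proof (Nat.pow_nonzero 2 K); lia).
      assert (N1 : 1 <= 2 ^ n) by (pose proof (Nat.pow_nonzero 2 n); lia).
      assert (H3' : 2 ^ n <= 3 * 2 ^ K * t) by nia.
      assert (2 ^ n * 2 ^ alpha <= 2 ^ n * (3 * 2 ^ c0 * t)) by nia.
      apply (Nat.mul_le_mono_pos_l _ _ (2 ^ n)); lia. }
    apply le_INR in HN. rewrite pow_INR in HN. simpl (INR 2) in HN.
    assert (Hn1 : (1 <= INR n ^ 5)%R).
    { rewrite <- pow_INR. replace 1%R with (INR 1) by reflexivity. apply le_INR.
      pose proof (Nat.pow_le_mono_l 1 n 5 ltac:(lia)) as Hp. simpl (1 ^ 5) in Hp. lia. }
    assert (Cpos : (0 < INR (3 * 2 ^ c0))%R).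
    { apply lt_0_INR. pose proof (Nat.pow_nonzero 2 c0). lia. }
    rewrite mult_INR in HN.
    apply Rle_ge. unfold Rdiv. apply (Rmult_le_reg_l (INR (3 * 2 ^ c0) * INR n ^ 5)).
    { apply Rmult_lt_0_compat; lra. }
    rewrite (Rmult_comm (2 ^ alpha)), <- Rmult_assoc, Rinv_r by (apply Rgt_not_eq; apply Rmult_lt_0_compat; lra).
    rewrite Rmult_1_l. rewrite mult_INR in Cpos |- *.
    assert (0 <= INR t)%R by apply pos_INR.
    replace (1+1)%R with 2%R in HN by ring. rewrite mult_INR in HN.
    assert (Hp : (0 <= INR 3 * INR (2 ^ c0) * INR t)%R) by (apply Rmult_le_pos; lra).
    assert (INR 3 * INR (2 ^ c0) * INR t * 1 <= INR 3 * INR (2 ^ c0) * INR t * INR n ^ 5)%R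
      by (apply Rmult_le_compat_l; lra).
    nra.
  - intros x y Hx Hy Hxy. specialize (H4 x y Hx Hy Hxy). unfold bad in H4.
    apply Nat.ltb_ge in H4.
    assert (Hlx : length x = n) by (rewrite Forall_forall in H2; auto).
    specialize (Hc0 x). rewrite Hlx in Hc0.
    assert (KC V x <= KCc U x y + alpha) by (unfold K in H4; lia).
    apply le_INR in H. rewrite plus_INR in H. lra.
Qed.
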